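(* Let $\mathcal{A}$ be a primal algebra and let $<$ be a linear order on its universe $A$. Then the class of objects of $\mathbf{OV}_{\mathit{fin}}(\mathcal{A},<)$ has the hereditary property: every substructure of an object of $\mathbf{OV}_{\mathit{fin}}(\mathcal{A},<)$ is itself an object of $\mathbf{OV}_{\mathit{fin}}(\mathcal{A},<)$.
   Context: A primal algebra is a finite algebra with at least two elements in which every finitary operation on its universe is a term operation. For a linear order $<$ on $A$ and a positive integer $n$, the antilexicographic order $\sqsubset$ on $A^n$ is: $(x_1,\dots,x_n)\sqsubset(y_1,\dots,y_n)$ iff there is $s$ with $x_t=y_t$ for all $t>s$ and $x_s<y_s$. For a permutation $\pi$ of $\{1,\dots,n\}$, $\bar x\sqsubset_\pi\bar y$ iff $(x_{\pi(1)},\dots,x_{\pi(n)})\sqsubset(y_{\pi(1)},\dots,y_{\pi(n)})$; $\sqsubseteq_\pi$ is its reflexive version and $\mathcal{A}^n_{\sqsubseteq_\pi}$ is the power algebra $\mathcal{A}^n$ expanded by the relation $\sqsubseteq_\pi$. $\mathbf{OV}_{\mathit{fin}}(\mathcal{A},<)$ is the category whose objects are all structures isomorphic to some $\mathcal{A}^n_{\sqsubseteq_\pi}$ ($n$ a positive integer, $\pi$ a permutation of $\{1,\dots,n\}$) and whose morphisms are embeddings (injective maps preserving the operations and preserving and reflecting the order relation). A substructure is a subset closed under the operations, with the induced operations and order. *)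

(* Defs.v *)
From mathcomp Require Import all_boot all_order.
From mathcomp Require Import perm.
Set Implicit Arguments. Unset Strict Implicit. Unset Printing Implicit Defensive.

Section Defs.
Variables (I : Type) (ar : I -> nat).

Inductive term (V : Type) : Type :=
| Var : V -> term V
| App : forall i : I, ('I_(ar i) -> term V) -> term V.

Fixpoint eval_term (X : Type) (ops : forall i, ('I_(ar i) -> X) -> X)
    (V : Type) (v : V -> X) (t : term V) : X :=
  match t with
  | Var x => v x
  | App i ts => ops i (fun j => eval_term ops v (ts j))
  end.

Definition primal (A : finType) (ops : forall i, ('I_(ar i) -> A) -> A) : Prop :=
  (2 <= #|A|)%N /\
  forall (n : nat) (f : ('I_n.+1 -> A) -> A),
    exists t : term 'I_n.+1, forall x : 'I_n.+1 -> A, eval_term ops x t = f x.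

Definition strict_linear_order (A : Type) (lt : rel A) : Prop :=
  (forall a, ~~ lt a a) /\
  (forall a b c, lt a b -> lt b c -> lt a c) /\
  (forall a b, a <> b -> lt a b \/ lt b a).

Record structure := Structure {
  carrier :> Type;
  sops : forall i, ('I_(ar i) -> carrier) -> carrier;
  srel : carrier -> carrier -> Prop
}.
Arguments sops : clear implicits.
Arguments srel : clear implicits.

Definition is_iso (S T : structure) (f : S -> T) : Prop :=
  bijective f /\
  (forall i (x : 'I_(ar i) -> S), f (sops S i x) = sops T i (fun j => f (x j))) /\
  (forall a b : S, srel S a b <-> srel T (f a) (f b)).

Definition isomorphic (S T : structure) : Prop := exists f : S -> T, is_iso f.

Definition op_closed (S : structure) (P : S -> Prop) : Prop :=
  forall i (x : 'I_(ar i) -> S), (forall j, P (x j)) -> P (sops S i x).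

Definition substructure (S : structure) (P : S -> Prop) (HP : op_closed P)
  : structure :=
  @Structure {x : S | P x}
    (fun i x => exist P (sops S i (fun j => sval (x j)))
                      (HP i _ (fun j => proj2_sig (x j))))
    (fun a b => srel S (sval a) (sval b)).

Definition antilex (A : Type) (lt : rel A) (n : nat) (x y : 'I_n -> A) : Prop :=
  exists s : 'I_n, (forall t : 'I_n, (s < t)%N -> x t = y t) /\ lt (x s) (y s).

Definition antilex_perm (A : Type) (lt : rel A) (n : nat) (pi : {perm 'I_n})
    (x y : 'I_n -> A) : Prop :=
  antilex lt (fun t => x (pi t)) (fun t => y (pi t)).

Definition antilex_perm_le (A : Type) (lt : rel A) (n : nat) (pi : {perm 'I_n})
    (x y : 'I_n -> A) : Prop :=
  x = y \/ antilex_perm lt pi x y.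

Definition power_struct (A : finType) (ops : forall i, ('I_(ar i) -> A) -> A)
    (lt : rel A) (n : nat) (pi : {perm 'I_n}) : structure :=
  @Structure {ffun 'I_n -> A}
    (fun i x => [ffun k => ops i (fun j => x j k)])
    (fun a b => antilex_perm_le lt pi a b).

Definition OV_fin_object (A : finType) (ops : forall i, ('I_(ar i) -> A) -> A)
    (lt : rel A) (S : structure) : Prop :=
  exists (n : nat) (pi : {perm 'I_n.+1}), isomorphic S (power_struct ops lt pi).

End Defs.

(* Main.v *)
Require Import Defs.
From mathcomp Require Import all_boot all_order.
From mathcomp Require Import perm.
From Stdlib Require Import ClassicalEpsilon ProofIrrelevance FunctionalExtensionality.
Set Implicit Arguments. Unset Strict Implicit. Unset Printing Implicit Defensive.

Section Iso.
Variables (I : Type) (ar : I -> nat).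

Lemma iso_trans (S T U : structure ar) :
  isomorphic S T -> isomorphic T U -> isomorphic S U.
Proof.
move=> [f [[g fg gf] [fo fr]]] [f' [[g' fg' gf'] [fo' fr']]].
exists (f' \o f); split; first by exists (g \o g') => x /=; rewrite ?fg ?fg' ?gf ?gf'.
split; first by move=> i x /=; rewrite fo fo'.
by move=> a b /=; rewrite fr fr'.
Qed.

Lemma iso_sub (S T : structure ar) (f : S -> T) : is_iso f ->
  forall (P : S -> Prop) (HP : op_closed P), (exists x, P x) ->
  exists (Q : T -> Prop) (HQ : op_closed Q),
    (exists y, Q y) /\ isomorphic (substructure HP) (substructure HQ).
Proof.
move=> [[g fg gf] [fo fr]] P HP [x Px].
have HQ : op_closed (fun y => P (g y)).
  move=> i y Hy.
  have -> : sops y = f (sops (fun j => g (y j))).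
    by rewrite fo; congr sops; apply: functional_extensionality => j; rewrite gf.
  by rewrite fg; apply: HP.
exists (fun y => P (g y)), HQ; split; first by exists (f x); rewrite fg.
pose F (x : substructure HP) : substructure HQ :=
  exist (fun y => P (g y)) (f (sval x)) (eq_ind_r P (proj2_sig x) (fg (sval x))).
pose G (y : substructure HQ) : substructure HP := exist P (g (sval y)) (proj2_sig y).
exists F; split.
  exists G => [[a pa]|[a pa]]; apply: subset_eq_compat => /=; [exact: fg | exact: gf].
split.
  by move=> i y; apply: subset_eq_compat => /=; rewrite fo.
by move=> a b /=; apply: fr.
Qed.
End Iso.
Section Main.
Variables (I : Type) (ar : I -> nat) (A : finType)
  (ops : forall i, ('I_(ar i) -> A) -> A) (lt : rel A).
Hypothesis Hprim : primal ops.
Hypothesis Hlt : strict_linear_order lt.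
Variables (n : nat) (pi : {perm 'I_n.+1}).
Variable Q : {ffun 'I_n.+1 -> A} -> Prop.
Hypothesis HQ : op_closed (S := power_struct ops lt pi) Q.
Variable b0 : {ffun 'I_n.+1 -> A}.
Hypothesis Qb0 : Q b0.

Definition N := #|{ffun 'I_n.+1 -> A}|.
Definition h (j : 'I_N.+1) : {ffun 'I_n.+1 -> A} :=
  let y := nth b0 (enum {ffun 'I_n.+1 -> A}) j in
  if excluded_middle_informative (Q y) then y else b0.

Lemma Qh j : Q (h j).
Proof. by rewrite /h; case: excluded_middle_informative. Qed.

Lemma h_surj b : Q b -> exists j, h j = b.
Proof.
move=> Qb.
have hi : index b (enum {ffun 'I_n.+1 -> A}) < N.+1.
  by rewrite ltnS ltnW // /N cardE index_mem mem_enum.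
exists (Ordinal hi); rewrite /h /= nth_index ?mem_enum //.
by case: excluded_middle_informative.
Qed.

Definition Eu (i i' : 'I_n.+1) : bool := [forall j : 'I_N.+1, h j i == h j i'].

Lemma EuP i i' : reflect (forall b, Q b -> b i = b i') (Eu i i').
Proof.
apply: (iffP forallP) => [H b /h_surj [j <-] | H j].
  exact/eqP.
by apply/eqP; apply: H; apply: Qh.
Qed.

Definition E (k l : 'I_n.+1) := Eu (pi k) (pi l).

Lemma E_refl k : E k k.
Proof. by apply/EuP. Qed.
Lemma E_sym k l : E k l -> E l k.
Proof. by move/EuP=> H; apply/EuP=> b Qb; rewrite H. Qed.
Lemma E_trans k l p : E k l -> E l p -> E k p.
Proof. by move/EuP=> H1 /EuP H2; apply/EuP=> b Qb; rewrite H1 ?H2. Qed.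

Definition rep (k : 'I_n.+1) : bool := [forall l : 'I_n.+1, (k < l) ==> ~~ E k l].
Definition R := [seq k <- enum 'I_n.+1 | rep k].
Definition r (k : 'I_n.+1) : 'I_n.+1 := fintype.arg_max k (fun l => E k l) (fun l => val l).

Lemma r_spec k : E k (r k) /\ forall l, E k l -> (l <= r k)%N.
Proof.
rewrite /r; case: fintype.arg_maxnP; first exact: E_refl.
by move=> i Ei Hi; split.
Qed.

Lemma r_rep k : rep (r k).
Proof.
have [Ek Hk] := r_spec k.
apply/forallP => l; apply/implyP => lt1; apply/negP => El.
by have := Hk l (E_trans Ek El); rewrite leqNgt lt1.
Qed.

Lemma r_R k : r k \in R.
Proof. by rewrite mem_filter r_rep mem_enum. Qed.

Lemma r_ge (k : 'I_n.+1) : (k <= r k)%N.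
Proof. by have [_ H] := r_spec k; apply: H; apply: E_refl. Qed.

Lemma r_repid k : rep k -> r k = k.
Proof.
move=> /forallP Hk; have [Ek _] := r_spec k; apply/val_inj/eqP.
rewrite eqn_leq r_ge andbT leqNgt; apply/negP => lt1.
by move: (Hk (r k)); rewrite lt1 Ek.
Qed.

Lemma r_E k l : E k l -> r k = r l.
Proof.
move=> Ekl; have [Ek Hk] := r_spec k; have [El Hl] := r_spec l.
apply/val_inj/eqP; rewrite eqn_leq; apply/andP; split.
  by apply: Hl; apply: E_trans (E_sym Ekl) Ek.
by apply: Hk; apply: E_trans Ekl El.
Qed.

Lemma R_uniq : uniq R.
Proof. by rewrite filter_uniq ?enum_uniq. Qed.

Lemma R_sorted : sorted (fun a b : 'I_n.+1 => (a < b)%N) R.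
Proof.
apply: sorted_filter; first by move=> ? ? ?; apply: ltn_trans.
by have := iota_ltn_sorted 0 n.+1; rewrite -val_enum_ord sorted_map.
Qed.

Lemma R_mono i j : (i < size R)%N -> (j < size R)%N ->
  ((nth ord0 R i < nth ord0 R j)%N = (i < j)%N).
Proof.
move=> hi hj; have tr : transitive (fun a b : 'I_n.+1 => (a < b)%N).
  by move=> ? ? ?; apply: ltn_trans.
case: (ltnP i j) => ij.
  by apply: (sorted_ltn_nth tr ord0 R_sorted).
rewrite leq_eqVlt in ij; case/orP: ij => [/eqP -> | ji].
  by rewrite ltnn.
by apply/negbTE; rewrite -leqNgt ltnW //; apply: (sorted_ltn_nth tr ord0 R_sorted).
Qed.

Lemma size_R : (0 < size R)%N.
Proof.
have : r ord0 \in R := r_R ord0.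
by case: R.
Qed.

Definition m := (size R).-1.

Lemma m_size : m.+1 = size R.
Proof. by rewrite /m prednK // size_R. Qed.

Definition phi0 (x : {ffun 'I_n.+1 -> A}) : {ffun 'I_m.+1 -> A} :=
  [ffun c : 'I_m.+1 => x (pi (nth ord0 R c))].
Definition psi0 (z : {ffun 'I_m.+1 -> A}) : {ffun 'I_n.+1 -> A} :=
  [ffun i : 'I_n.+1 => z (inord (index (r ((pi^-1)%g i)) R))].

Lemma closure (t : term ar 'I_N.+1) :
  Q [ffun i : 'I_n.+1 => eval_term ops (fun j => h j i) t].
Proof.
elim: t => [j | k ts IH] /=.
  have -> : [ffun i : 'I_n.+1 => h j i] = h j by apply/ffunP => i; rewrite ffunE.
  exact: Qh.
have -> : [ffun i : 'I_n.+1 => @ops k (fun j => eval_term ops (fun j0 => h j0 i) (ts j))]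
   = sops (s := power_struct ops lt pi)
       (fun j => [ffun i : 'I_n.+1 => eval_term ops (fun j0 => h j0 i) (ts j)]).
  apply/ffunP => i; rewrite /= !ffunE; congr ops.
  by apply: functional_extensionality => j; rewrite ffunE.
by apply: HQ.
Qed.

Lemma Qpsi z : Q (psi0 z).
Proof.
have [_ prim] := Hprim.
pose fz (v : 'I_N.+1 -> A) : A :=
  if [pick i : 'I_n.+1 | [forall j, h j i == v j]] is Some i then psi0 z i
  else z ord0.
have [t Ht] := prim N fz.
have -> : psi0 z = [ffun i : 'I_n.+1 => eval_term ops (fun j => h j i) t].
  apply/ffunP => i; rewrite [RHS]ffunE Ht /fz.
  case: pickP => [i0 Hi0 | /(_ i)].
    rewrite !ffunE; congr (z (inord (index _ R))); apply: r_E; apply: E_sym.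
    by rewrite /E /Eu !permKV.
  by move/negbT/negP; case; apply/forallP.
exact: closure.
Qed.

Lemma phi_psi z : phi0 (psi0 z) = z.
Proof.
apply/ffunP => c; rewrite !ffunE permK.
have cR : (c < size R)%N by rewrite -m_size.
have repc : rep (nth ord0 R c).
  by have := mem_nth ord0 cR; rewrite mem_filter => /andP[].
rewrite r_repid // index_uniq ?R_uniq //.
by rewrite inord_val.
Qed.

Lemma psi_phi x : Q x -> psi0 (phi0 x) = x.
Proof.
move=> Qx; apply/ffunP => i; rewrite !ffunE.
have hi : (index (r ((pi^-1)%g i)) R < m.+1)%N by rewrite m_size index_mem r_R.
rewrite inordK // nth_index ?r_R //.
have [Ek _] := r_spec ((pi^-1)%g i).
move/EuP: Ek => Ek; rewrite -(Ek x Qx) permKV //.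
Qed.

Lemma strict_equiv (a b : {ffun 'I_n.+1 -> A}) : Q a -> Q b ->
  antilex_perm lt pi a b <-> antilex_perm lt (1%g : {perm 'I_m.+1}) (phi0 a) (phi0 b).
Proof.
move=> Qa Qb; have [irr [_ _]] := Hlt; split.
  move=> [s [Hs Hl]].
  have reps : rep s.
    apply/forallP => l; apply/implyP => sl; apply/negP => /EuP Esl.
    move: Hl; rewrite (Esl a Qa) (Hs l sl) -(Esl b Qb).
    by rewrite (negbTE (irr _)).
  have sR : s \in R by rewrite mem_filter reps mem_enum.
  have hi : (index s R < m.+1)%N by rewrite m_size index_mem.
  exists (Ordinal hi); split.
    move=> t /= it; rewrite !perm1 !ffunE; apply: Hs.
    have tR : (t < size R)%N by rewrite -m_size.
    by rewrite -{1}(nth_index ord0 sR) R_mono // index_mem.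
  by rewrite !perm1 !ffunE /= nth_index.
move=> [c [Hc Hl]].
have cR : (c < size R)%N by rewrite -m_size.
exists (nth ord0 R c); split; last by move: Hl; rewrite !perm1 !ffunE.
move=> t st.
have [Et _] := r_spec t; move/EuP: Et => Et.
rewrite (Et a Qa) (Et b Qb).
have hi : (index (r t) R < m.+1)%N by rewrite m_size index_mem r_R.
have := Hc (Ordinal hi); rewrite !perm1 !ffunE /= nth_index ?r_R //; apply.
rewrite -(R_mono cR) ?index_mem ?r_R // nth_index ?r_R //.
exact: leq_trans st (r_ge t).
Qed.

Lemma main_iso : exists (m' : nat) (sg : {perm 'I_m'.+1}),
  isomorphic (substructure HQ) (power_struct ops lt sg).
Proof.
exists m, 1%g.
pose F (x : substructure HQ) : power_struct ops lt (1%g : {perm 'I_m.+1}) :=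
  phi0 (sval x).
pose G (z : power_struct ops lt (1%g : {perm 'I_m.+1})) : substructure HQ :=
  exist Q (psi0 z) (Qpsi z).
exists F; split.
  exists G => [[a pa]|z]; last exact: phi_psi.
  by apply: subset_eq_compat; rewrite /= psi_phi.
split.
  move=> i x; apply/ffunP => c; rewrite /F /= !ffunE; congr ops.
  by apply: functional_extensionality => j; rewrite ffunE.
move=> [a pa] [b pb]; rewrite /F /=.
rewrite /antilex_perm_le; split => [[ab|H]|[ab|H]].
- by left; have -> : a = b by apply/ffunP => i; exact: (congr1 (fun f => f i) ab).
- by right; apply/strict_equiv.
- left; have : phi0 a = phi0 b by apply/ffunP => c; exact: (congr1 (fun f => f c) ab).
  by move/(congr1 psi0); rewrite !psi_phi // => ->.
- by right; apply/(strict_equiv pa pb).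
Qed.
End Main.

Theorem lemma5p3 (I : Type) (ar : I -> nat) (A : finType)
    (ops : forall i, ('I_(ar i) -> A) -> A) (lt : rel A) :
  primal ops -> strict_linear_order lt ->
  forall (S : structure ar), OV_fin_object ops lt S ->
  forall (P : S -> Prop) (HP : op_closed P),
    (exists x, P x) ->
    OV_fin_object ops lt (substructure HP).
Proof.
move=> Hprim Hlt S [n [pi [f Hf]]] P HP ex.
have [Q [HQ [[y Qy] iso1]]] := iso_sub Hf HP ex.
have [m' [sg iso2]] := main_iso Hprim Hlt HQ Qy.
exists m', sg; exact: iso_trans iso1 iso2.
Qed.
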